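(* If two groups $\mathsf G^{(e_2,e_3,h_2,h_3)}_\beta$ and $\mathsf G^{(e_2',e_3',h_2',h_3')}_{\beta'}$ (as defined in the context) are isomorphic as algebraic permutation groups, then $(e_2',e_3',h_2',h_3')=(e_2,e_3,h_2,h_3)$.
   Context: Let $\mathsf k$ be an algebraically closed field. For admissible data, $\mathsf G^{(e_2,e_3,h_2,h_3)}_\beta=(G,\mathsf k^2,\overline\Omega)$ denotes the following group. On $\mathsf k^3$ define $(x_1,x_2,x_3)(y_1,y_2,y_3)=\big(x_1+y_1+\psi_1(x_3,y_2,y_3),\ x_2+y_2+\psi_2(x_3,y_3),\ x_3+y_3\big)$ with $\psi_1(x_3,y_2,y_3)=y_2^{h_2}x_3^{h_3}+\beta(x_3,y_3)$, $h_i=p^{l_i}$ if $\mathrm{char}\,\mathsf k=p>0$ and $h_i=1$ otherwise, and either (A) $\psi_2=0$ and $\beta\in\{0,\ \sum_{i=1}^{p-1}\frac1p\binom pi x_3^{ip^r}y_3^{(p-i)p^r},\ x_3^{p^r}y_3^{p^s}\}$ ($r<s$; nonzero options only in characteristic $p>0$), or (B) $\mathrm{char}\,\mathsf k=p>2$, $\psi_2=x_3^{p^m}y_3^{p^n}$ with $m<n$, $l_3-l_2\in\{m,n\}$, and $\beta=\frac12x_3^{2p^{l_3}}y_3^{p^{l_2+n}}$ if $l_3-l_2=m$, $\beta=x_3^{p^{l_3}+p^{l_2+m}}y_3^{p^{l_3}}+\frac12x_3^{p^{l_2+m}}y_3^{2p^{l_3}}$ if $l_3-l_2=n$. $a\in\mathsf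 k^*$ acts on $\mathsf k^3$ by $(u_1,u_2,u_3)\mapsto(a^{e_1}u_1,a^{e_2}u_2,a^{e_3}u_3)$ with $e_3$ a positive power of $p$ (or $1$ in characteristic $0$), $e_1=e_2h_2+e_3h_3$, and if $\beta\neq0$ also $e_1=e_3\deg\beta$, $e_2=e_3(\deg\beta-h_3)/h_2$. $G=\mathsf k^3\rtimes\mathsf k^*$ for this action; it acts on $\mathsf k^2$ by $(u_1,u_2,u_3,a)\cdot(x,y)=\big(u_1+a^{e_1}x+\psi_1(u_3,0,a^{e_3}y),\ u_3+a^{e_3}y\big)$, and the blocks $\overline\Omega$ are the horizontal lines $y=\text{const}$. An isomorphism of algebraic permutation groups is a pair $(\Phi_1,\Phi_2)$ with $\Phi_1$ an isomorphism of algebraic groups and $\Phi_2:\mathsf k^2\to\mathsf k^2$ a bijective morphism mapping blocks onto blocks with $\Phi_2(g(P))=\Phi_1(g)(\Phi_2(P))$. *)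

(* Defs.v *)
From HB Require Import structures.
From mathcomp Require Import all_boot all_order all_algebra.
Set Implicit Arguments. Unset Strict Implicit. Unset Printing Implicit Defensive.
Import GRing.Theory.
Local Open Scope ring_scope.

(* Choice of beta (and psi2):
   BZero        : case (A), beta = 0
   BSum r       : case (A), beta = sum_{i=1}^{p-1} (1/p) C(p,i) x^{i p^r} y^{(p-i) p^r}
   BMon r s     : case (A), beta = x^{p^r} y^{p^s}            (r < s)
   CaseBm m n   : case (B), psi2 = x^{p^m} y^{p^n}, l3 - l2 = m
   CaseBn m n   : case (B), psi2 = x^{p^m} y^{p^n}, l3 - l2 = n *)
Inductive bkind := BZero | BSum of nat | BMon of nat & nat
                 | CaseBm of nat & nat | CaseBn of nat & nat.

Record gdata := GData { d_l2 : nat; d_l3 : nat; d_beta : bkind;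
                        d_e2 : int; d_k3 : nat }.

Definition char_exp (K : fieldType) (q : nat) : Prop :=
  (q \in [pchar K]) \/ ([pchar K] =i pred0 /\ q = 1%N).

(* group elements (u1,u2,u3,a) of k^3 x k^* *)
Record G4 (K : Type) := mkG { c1 : K; c2 : K; c3 : K; ca : K }.

Section Defs.
Variables (K : fieldType) (q : nat).

Definition h2 (d : gdata) : nat := (q ^ d_l2 d)%N.
Definition h3 (d : gdata) : nat := (q ^ d_l3 d)%N.
Definition e3 (d : gdata) : int := (q ^ d_k3 d)%N%:Z.
Definition e1 (d : gdata) : int := d_e2 d * (h2 d)%:Z + e3 d * (h3 d)%:Z.

Definition beta (d : gdata) (x y : K) : K :=
  match d_beta d with
  | BZero => 0
  | BSum r => \sum_(1 <= i < q)
       (('C(q, i) %/ q)%N)%:R * x ^+ (i * q ^ r) * y ^+ ((q - i) * q ^ r)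
  | BMon r s => x ^+ (q ^ r) * y ^+ (q ^ s)
  | CaseBm m n => 2^-1 * x ^+ (2 * q ^ d_l3 d) * y ^+ (q ^ (d_l2 d + n))
  | CaseBn m n => x ^+ (q ^ d_l3 d + q ^ (d_l2 d + m)) * y ^+ (q ^ d_l3 d)
                  + 2^-1 * x ^+ (q ^ (d_l2 d + m)) * y ^+ (2 * q ^ d_l3 d)
  end.

Definition degbeta (d : gdata) : nat :=
  match d_beta d with
  | BZero => 0
  | BSum r => q ^ r.+1
  | BMon r s => q ^ r + q ^ s
  | CaseBm m n => 2 * q ^ d_l3 d + q ^ (d_l2 d + n)
  | CaseBn m n => 2 * q ^ d_l3 d + q ^ (d_l2 d + m)
  end.

Definition psi2 (d : gdata) (x3 y3 : K) : K :=
  match d_beta d with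
  | CaseBm m n | CaseBn m n => x3 ^+ (q ^ m) * y3 ^+ (q ^ n)
  | _ => 0
  end.

Definition psi1 (d : gdata) (x3 y2 y3 : K) : K :=
  y2 ^+ h2 d * x3 ^+ h3 d + beta d x3 y3.

(* admissibility of the data (q is assumed to be the characteristic exponent) *)
Definition admissible (d : gdata) : bool :=
  (match d_beta d with
      | BZero => true
      | BSum r => prime q
      | BMon r s => prime q && (r < s)%N
      | CaseBm m n => [&& prime q, (2 < q)%N, (m < n)%N & d_l3 d == (d_l2 d + m)%N]
      | CaseBn m n => [&& prime q, (2 < q)%N, (m < n)%N & d_l3 d == (d_l2 d + n)%N]
      end)
  && ((if d_beta d is BZero then false else true) ==>
        (d_e2 d * (h2 d)%:Z == e3 d * ((degbeta d)%:Z - (h3 d)%:Z))).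

Definition inG (g : G4 K) : bool := ca g != 0.

(* multiplication of G = k^3 x| k^* : (u,a)(v,b) = (u * (a.v), ab) *)
Definition gmul (d : gdata) (g h : G4 K) : G4 K :=
  let a := ca g in
  let v1 := a ^ e1 d * c1 h in
  let v2 := a ^ d_e2 d * c2 h in
  let v3 := a ^ e3 d * c3 h in
  mkG (c1 g + v1 + psi1 d (c3 g) v2 v3) (c2 g + v2 + psi2 d (c3 g) v3)
      (c3 g + v3) (a * ca h).

Definition gact (d : gdata) (g : G4 K) (P : K * K) : K * K :=
  (c1 g + ca g ^ e1 d * P.1 + psi1 d (c3 g) 0 (ca g ^ e3 d * P.2),
   c3 g + ca g ^ e3 d * P.2).

(* polynomials in several variables as iterated univariate polynomials *)
Definition eval2 (P : {poly {poly K}}) (x y : K) : K := (P.[y%:P]).[x].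
Definition eval4 (P : {poly {poly {poly {poly K}}}}) (x1 x2 x3 x4 : K) : K :=
  (((P.[x4%:P%:P%:P]).[x3%:P%:P]).[x2%:P]).[x1].

(* regular functions on the affine variety k^3 x k^* *)
Definition regG (f : G4 K -> K) : Prop :=
  exists (P : {poly {poly {poly {poly K}}}}) (n : nat),
    forall g, inG g -> f g = eval4 P (c1 g) (c2 g) (c3 g) (ca g) / ca g ^+ n.

Definition morphG (F : G4 K -> G4 K) : Prop :=
  [/\ forall g, inG g -> inG (F g),
      regG (fun g => c1 (F g)), regG (fun g => c2 (F g)),
      regG (fun g => c3 (F g)) & regG (fun g => ca (F g))].

Definition morphA2 (F : K * K -> K * K) : Prop :=
  (exists P, forall x y, (F (x, y)).1 = eval2 P x y) /\
  (exists P, forall x y, (F (x, y)).2 = eval2 P x y).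

Definition isom_alg_perm (d d' : gdata) : Prop :=
  exists (F Finv : G4 K -> G4 K) (Phi2 : K * K -> K * K),
  [/\
      morphG F, morphG Finv,
      (forall g, inG g -> Finv (F g) = g),
      (forall g, inG g -> F (Finv g) = g) &
      (forall g h, inG g -> inG h -> F (gmul d g h) = gmul d' (F g) (F h))]
  /\ [/\ (* Phi2 is a bijective morphism mapping blocks onto blocks *)
      bijective Phi2, morphA2 Phi2,
      (forall c, exists c', forall P,
          (exists2 Q, Q.2 = c & Phi2 Q = P) <-> P.2 = c') &
      (forall g P, inG g -> Phi2 (gact d g P) = gact d' (F g) (Phi2 P))].

End Defs.

(* Main.v *)
Require Import Defs.
From HB Require Import structures.
From mathcomp Require Import all_boot all_order all_algebra.
From mathcomp Require Import ring.
Set Implicit Arguments. Unset Strict Implicit. Unset Printing Implicit Defensive.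
Import GRing.Theory.
Local Open Scope ring_scope.

Lemma poly_vanish (K : closedFieldType) (p : {poly K}) :
  (forall a, p.[a] = 0) -> p = 0.
Proof.
move=> H; apply/eqP; apply/negPn/negP => /(closed_nonrootP p) [x].
by rewrite /root H eqxx.
Qed.

Lemma poly_vanish0 (K : closedFieldType) (p : {poly K}) :
  (forall a, a != 0 -> p.[a] = 0) -> p = 0.
Proof.
move=> H; have : p * 'X = 0.
  apply: poly_vanish => a; rewrite hornerM hornerX.
  by have [->|a0] := eqVneq a 0; rewrite ?mulr0 // H // mul0r.
by move/eqP; rewrite mulf_eq0 polyX_eq0 orbF => /eqP.
Qed.

Lemma pow_one (K : closedFieldType) (k : nat) :
  (forall a : K, a != 0 -> a ^+ k = 1) -> k = 0%N.
Proof.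
move=> H; case: k H => // k H.
have : ('X^(k.+1) - 1%:P : {poly K}) = 0.
  by apply: poly_vanish0 => a a0; rewrite hornerD hornerN hornerXn hornerC H ?subrr.
move/(congr1 (fun p : {poly K} => size p)).
by rewrite size_XnsubC ?size_poly0.
Qed.

Lemma hm (R : comNzRingType) (K : closedFieldType) (f : {rmorphism R -> K}) (p : {poly R}) x :
  f p.[x] = (map_poly f p).[f x].
Proof. by rewrite horner_map. Qed.

Lemma ev4_4 (K : closedFieldType) (P : {poly {poly {poly {poly K}}}}) :
  exists p : {poly K}, forall t, eval4 P 0 0 0 t = p.[t].
Proof.
pose f := (horner_eval (0:K)) \o (horner_eval (0:{poly K})) \o (horner_eval (0 : {poly {poly K}})).
exists (map_poly f P) => t.
have Ht : f (t%:P%:P%:P) = t by rewrite /f /= !horner_evalE !hornerC.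
by rewrite -{2}Ht horner_map /eval4 /f /= !horner_evalE !polyC0.
Qed.

Lemma ev4_3 (K : closedFieldType) (P : {poly {poly {poly {poly K}}}}) :
  exists p : {poly K}, forall t, eval4 P 0 0 t 1 = p.[t].
Proof.
pose f := (horner_eval (0:K)) \o (horner_eval (0:{poly K})).
exists (map_poly f (P.[1%:P%:P%:P])) => t.
have Ht : f (t%:P%:P) = t by rewrite /f /= !horner_evalE !hornerC.
by rewrite -{2}Ht horner_map /eval4 /f /= !horner_evalE !polyC0.
Qed.

Lemma ev4_2 (K : closedFieldType) (P : {poly {poly {poly {poly K}}}}) :
  exists p : {poly K}, forall t, eval4 P 0 t 0 1 = p.[t].
Proof.
pose f := (horner_eval (0:K)).
exists (map_poly f ((P.[1%:P%:P%:P]).[0%:P%:P])) => t.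
have Ht : f (t%:P) = t by rewrite /f /= !horner_evalE !hornerC.
by rewrite -{2}Ht horner_map /eval4 /f /= !horner_evalE.
Qed.

Lemma ev4_1 (K : closedFieldType) (P : {poly {poly {poly {poly K}}}}) :
  exists p : {poly K}, forall t, eval4 P t 0 0 1 = p.[t].
Proof.
by exists (((P.[1%:P%:P%:P]).[0%:P%:P]).[0%:P]) => t.
Qed.

Lemma ev2_y (K : closedFieldType) (P : {poly {poly K}}) :
  exists p : {poly K}, forall t, eval2 P 0 t = p.[t].
Proof.
pose f := (horner_eval (0:K)).
exists (map_poly f P) => t.
have Ht : f (t%:P) = t by rewrite /f /= !horner_evalE !hornerC.
by rewrite -{2}Ht horner_map /eval2 /f /= !horner_evalE.
Qed.

Lemma frob_inj (K : fieldType) q k (x y : K) :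
  char_exp K q -> x ^+ (q ^ k) = y ^+ (q ^ k) -> x = y.
Proof.
case=> [hp | [_ ->]]; last by rewrite exp1n !expr1.
elim: k x y => [|k IH] x y; first by rewrite !expr1.
rewrite expnSr !exprM => /eqP E; apply: IH; move: E.
rewrite -subr_eq0 -!(pFrobenius_autE hp) -pFrobenius_autB_comm; last exact: mulrC.
by rewrite pFrobenius_autE expf_eq0 subr_eq0 => /andP[_ /eqP].
Qed.

Lemma char_exp_gt0 (K : fieldType) q : char_exp K q -> (0 < q)%N.
Proof.
case=> [hp | [_ ->]] //; exact: prime_gt0 (pcharf_prime hp).
Qed.

Lemma powz_inj (K : closedFieldType) (m n : int) :
  (forall a : K, a != 0 -> a ^ m = a ^ n) -> m = n.
Proof.
move=> H; suff : m - n = 0 by move/eqP; rewrite subr_eq0 => /eqP.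
have H1 : forall a : K, a != 0 -> a ^ (m - n) = 1.
  move=> a a0; rewrite expfzDr // H // -expfzDr // subrr expr0z //.
case E : (m - n) => [k|k].
  congr Posz; apply: pow_one => a a0; by have := H1 a a0; rewrite E.
suff : k.+1 = 0%N by [].
apply: pow_one => b b0.
have := H1 b b0; rewrite E NegzE -invr_expz => /eqP; rewrite invr_eq1 => /eqP //.
Qed.

Lemma expr0p (K : fieldType) n : (0 < n)%N -> (0 : K) ^+ n = 0.
Proof. by case: n => // n _; rewrite expr0n. Qed.

Lemma qpow_gt0 q k : (0 < q)%N -> (0 < q ^ k)%N.
Proof. by move=> hq; rewrite expn_gt0 hq. Qed.

Lemma beta0y (K : fieldType) q d (y : K) : (0 < q)%N -> beta q d 0 y = 0.
Proof.
move=> hq; have P := qpow_gt0 _ hq.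
rewrite /beta; case: (d_beta d) => [|r|r s|m n|m n].
- by [].
- rewrite big1_seq // => i /andP[_]; rewrite mem_index_iota => /andP[i1 _].
  by rewrite expr0p ?mulr0 ?mul0r // muln_gt0 i1 P.
- by rewrite expr0p ?mul0r.
- by rewrite expr0p ?mulr0 ?mul0r // muln_gt0 P.
- by rewrite !expr0p ?mulr0 ?mul0r ?addr0 // ?addn_gt0 ?P ?muln_gt0 ?P.
Qed.

Lemma betax0 (K : fieldType) q d (x : K) : (0 < q)%N -> beta q d x 0 = 0.
Proof.
move=> hq; have P := qpow_gt0 _ hq.
rewrite /beta; case: (d_beta d) => [|r|r s|m n|m n].
- by [].
- rewrite big1_seq // => i /andP[_]; rewrite mem_index_iota => /andP[_ iq].
  by rewrite expr0p ?mulr0 ?mul0r // muln_gt0 subn_gt0 iq P.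
- by rewrite expr0p ?mulr0.
- by rewrite expr0p ?mulr0.
- by rewrite !expr0p ?mulr0 ?mul0r ?addr0 // ?muln_gt0 ?P.
Qed.

Lemma psi2x0 (K : fieldType) q d (x : K) : (0 < q)%N -> psi2 q d x 0 = 0.
Proof.
move=> hq; have P := qpow_gt0 _ hq.
by rewrite /psi2; case: (d_beta d) => [|r|r s|m n|m n] //; rewrite expr0p ?mulr0.
Qed.

Lemma psi20y (K : fieldType) q d (y : K) : (0 < q)%N -> psi2 q d 0 y = 0.
Proof.
move=> hq; have P := qpow_gt0 _ hq.
by rewrite /psi2; case: (d_beta d) => [|r|r s|m n|m n] //; rewrite expr0p ?mul0r.
Qed.

Lemma psi1_0 (K : fieldType) q d (y2 y3 : K) : (0 < q)%N -> psi1 q d 0 y2 y3 = 0.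
Proof.
move=> hq; rewrite /psi1 beta0y // /h3 expr0p ?mulr0 ?add0r //; exact: qpow_gt0.
Qed.

Lemma psi1_x00 (K : fieldType) q d (x : K) : (0 < q)%N -> psi1 q d x 0 0 = 0.
Proof.
move=> hq; rewrite /psi1 betax0 // /h2 expr0p ?mul0r ?add0r //; exact: qpow_gt0.
Qed.

Lemma psi1_xu0 (K : fieldType) q d (x u : K) : (0 < q)%N ->
  psi1 q d x u 0 = u ^+ h2 q d * x ^+ h3 q d.
Proof. by move=> hq; rewrite /psi1 betax0 // addr0. Qed.

Record DirHyp (K : closedFieldType) q d d' (F : G4 K -> G4 K)
   (Phi : K * K -> K * K) (lam mu : K) : Prop := {
  dh_q : char_exp K q;
  dh_in : forall g, inG g -> inG (F g);
  dh_hom : forall g h, inG g -> inG h -> F (gmul q d g h) = gmul q d' (F g) (F h);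
  dh_inj : forall g h, inG g -> inG h -> F g = F h -> g = h;
  dh_reg : morphG F;
  dh_sur : forall P', exists P, Phi P = P';
  dh_lam : lam != 0;
  dh_P2 : forall x y, (Phi (x, y)).2 = lam * y + mu;
  dh_comp : forall g P, inG g -> Phi (gact q d g P) = gact q d' (F g) (Phi P)
}.

Lemma dh_R1 K q d d' F Phi lam mu : @DirHyp K q d d' F Phi lam mu ->
  forall g, inG g -> ca (F g) ^ e3 q d' = ca g ^ e3 q d
            /\ c3 (F g) + ca (F g) ^ e3 q d' * mu = lam * c3 g + mu.
Proof.
case=> hq _ _ _ _ _ hl P2 comp g gG.
have E0 := congr1 snd (comp g (0, 0) gG).
have E1 := congr1 snd (comp g (0, 1) gG).
rewrite /= !P2 /= in E0 E1.
set A := ca g ^ e3 q d in E0 E1 *; set B := ca (F g) ^ e3 q d' in E0 E1 *.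
have E0' : c3 (F g) = lam * c3 g + mu - B * mu.
  by rewrite -[RHS]/(lam * c3 g + mu - B * mu); rewrite mulr0 addr0 in E0; rewrite E0 !mulr0 add0r addrK.
split; last by rewrite E0' subrK.
apply: (mulfI hl).
apply: (addrI (lam * c3 g + mu)).
apply: esym.
transitivity (lam * (c3 g + A * 1) + mu); first by ring.
rewrite E1 E0'; ring.
Qed.

Lemma G4_eta (K : Type) (g : G4 K) : g = mkG (c1 g) (c2 g) (c3 g) (ca g).
Proof. by case: g. Qed.

Lemma dh_uni K q d d' F Phi lam mu : @DirHyp K q d d' F Phi lam mu ->
  forall g, inG g -> ca g = 1 -> ca (F g) = 1 /\ c3 (F g) = lam * c3 g.
Proof.
move=> D g gG g1; have [E1 E2] := dh_R1 D gG.
have hq := dh_q D.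
have c1 : ca (F g) = 1.
  apply: (frob_inj (k := d_k3 d') hq); rewrite expr1n.
  by move: E1; rewrite g1 exp1rz /e3 -exprnP.
split => //; move: E2; rewrite c1 exp1rz mul1r => /addIr //.
Qed.

Lemma gact_unip (K : fieldType) q d (g : G4 K) x y : (0 < q)%N -> ca g = 1 ->
  gact q d g (x, y) = (c1 g + x + psi1 q d (c3 g) 0 y, c3 g + y).
Proof. by move=> hq g1; rewrite /gact g1 !exp1rz !mul1r. Qed.

Lemma dh_Fn K q d d' F Phi lam mu : @DirHyp K q d d' F Phi lam mu ->
  forall u, F (mkG 0 u 0 1) = mkG 0 (c2 (F (mkG 0 u 0 1))) 0 1.
Proof.
move=> D u; have hq := char_exp_gt0 (dh_q D).
have gG : inG (mkG 0 u 0 (1 : K)) by rewrite /inG oner_neq0.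
have [Ha Hc] := dh_uni D gG erefl; rewrite /= mulr0 in Hc.
have [P HP] := dh_sur D (0, 0).
have := dh_comp D P gG; case: P HP => x y HP.
rewrite gact_unip //= psi1_0 // addr0 !add0r HP gact_unip // Hc psi1_0 //.
rewrite !addr0 => [[E1]].
by rewrite [LHS]G4_eta -E1 Hc Ha.
Qed.

Lemma inG_mk (K : fieldType) (a b c e : K) : e != 0 -> inG (mkG a b c e).
Proof. by []. Qed.

Lemma inG1 (K : fieldType) (a b c : K) : inG (mkG a b c 1).
Proof. by rewrite /inG oner_neq0. Qed.

Lemma inG_mul (K : fieldType) q d (g h : G4 K) : inG g -> inG h -> inG (gmul q d g h).
Proof. by rewrite /inG /= => ? ?; rewrite mulf_neq0. Qed.

Lemma comm_G (K : fieldType) q d (u w : K) : (0 < q)%N ->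
  gmul q d (mkG 0 0 w 1) (mkG 0 u 0 1) =
  gmul q d (mkG (u ^+ h2 q d * w ^+ h3 q d) 0 0 1)
           (gmul q d (mkG 0 u 0 1) (mkG 0 0 w 1)).
Proof.
move=> hq; rewrite /gmul /= !exp1rz !mul1r !psi1_0 // psi1_xu0 //.
by rewrite psi2x0 // !psi20y // !addr0 !add0r.
Qed.

Lemma conj_G (K : fieldType) q d (u a : K) : (0 < q)%N ->
  gmul q d (mkG 0 0 0 a) (mkG 0 u 0 1) =
  gmul q d (mkG 0 (a ^ d_e2 d * u) 0 1) (mkG 0 0 0 a).
Proof.
move=> hq; rewrite /gmul /= !exp1rz !mul1r ?mulr0 ?psi1_0 // ?mulr1.
by rewrite !addr0 !add0r.
Qed.

Lemma dh_comm K q d d' F Phi lam mu : @DirHyp K q d d' F Phi lam mu ->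
  forall u w, c1 (F (mkG (u ^+ h2 q d * w ^+ h3 q d) 0 0 1)) =
     c2 (F (mkG 0 u 0 1)) ^+ h2 q d' * (lam * w) ^+ h3 q d'.
Proof.
move=> D u w; have hq := char_exp_gt0 (dh_q D).
have := congr1 F (comm_G d u w hq).
rewrite !(dh_hom D); try by [apply: inG1 | apply: inG_mul; apply: inG1].
rewrite (dh_Fn D u).
have [Ht1 Ht3] := dh_uni D (inG1 0 0 w) erefl.
have [Hz1 Hz3] := dh_uni D (inG1 (u ^+ h2 q d * w ^+ h3 q d) 0 0) erefl.
rewrite /= mulr0 in Hz3; rewrite /= in Ht3.
rewrite [F (mkG 0 0 w 1)]G4_eta [F (mkG _ 0 0 1)]G4_eta Ht1 Ht3 Hz1 Hz3.
rewrite /gmul /= !exp1rz !mul1r ?mulr0 ?psi1_0 // ?psi1_xu0 // ?addr0 ?add0r.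
move/(congr1 (@c1 K)) => /= E.
by apply: (addrI (c1 (F (mkG 0 0 w 1)))); rewrite E addrC.
Qed.

Lemma dh_conj K q d d' F Phi lam mu : @DirHyp K q d d' F Phi lam mu ->
  (forall a, a != 0 -> ca (F (mkG 0 0 0 a)) = a) ->
  forall a u, a != 0 -> c2 (F (mkG 0 (a ^ d_e2 d * u) 0 1)) =
     a ^ d_e2 d' * c2 (F (mkG 0 u 0 1)).
Proof.
move=> D Hchi a u a0; have hq := char_exp_gt0 (dh_q D).
have := congr1 F (conj_G d u a hq).
rewrite !(dh_hom D); try by [apply: inG1 | apply: inG_mk].
rewrite (dh_Fn D u) (dh_Fn D (a ^ d_e2 d * u)).
rewrite [F (mkG 0 0 0 a)]G4_eta Hchi //.
rewrite /gmul /= !exp1rz !mul1r !mulr0 psi2x0 // psi20y // !addr0.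
move/(congr1 (@c2 K)) => /= E.
by apply: (addIr (c2 (F (mkG 0 0 0 a)))); rewrite -E addrC.
Qed.

Lemma poly_eqf (K : closedFieldType) (p r : {poly K}) :
  (forall a, p.[a] = r.[a]) -> p = r.
Proof.
move=> H; apply/eqP; rewrite -subr_eq0; apply/eqP.
by apply: poly_vanish => a; rewrite hornerD hornerN H subrr.
Qed.

Lemma poly_eqf0 (K : closedFieldType) (p r : {poly K}) :
  (forall a, a != 0 -> p.[a] = r.[a]) -> p = r.
Proof.
move=> H; apply/eqP; rewrite -subr_eq0; apply/eqP.
by apply: poly_vanish0 => a a0; rewrite hornerD hornerN H // subrr.
Qed.

Lemma reg_1 (K : closedFieldType) (f : G4 K -> K) : regG f ->
  exists p : {poly K}, forall c, f (mkG c 0 0 1) = p.[c].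
Proof.
case=> P [n H]; have [p Hp] := ev4_1 P; exists p => c.
by rewrite H ?inG1 //= expr1n divr1 Hp.
Qed.

Lemma reg_2 (K : closedFieldType) (f : G4 K -> K) : regG f ->
  exists p : {poly K}, forall c, f (mkG 0 c 0 1) = p.[c].
Proof.
case=> P [n H]; have [p Hp] := ev4_2 P; exists p => c.
by rewrite H ?inG1 //= expr1n divr1 Hp.
Qed.

Lemma reg_3 (K : closedFieldType) (f : G4 K -> K) : regG f ->
  exists p : {poly K}, forall c, f (mkG 0 0 c 1) = p.[c].
Proof.
case=> P [n H]; have [p Hp] := ev4_3 P; exists p => c.
by rewrite H ?inG1 //= expr1n divr1 Hp.
Qed.

Lemma reg_4 (K : closedFieldType) (f : G4 K -> K) : regG f ->
  exists (p : {poly K}) n, forall c, c != 0 -> f (mkG 0 0 0 c) = p.[c] / c ^+ n.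
Proof.
case=> P [n H]; have [p Hp] := ev4_4 P; exists p, n => c c0.
by rewrite H //= Hp.
Qed.

Lemma dh_R3 K q d d' F Phi lam mu : @DirHyp K q d d' F Phi lam mu ->
  (q ^ d_k3 d' %| q ^ d_k3 d)%N.
Proof.
move=> D; have [_ _ _ _ reg] := dh_reg D.
have [R [n HR]] := reg_4 reg.
set N := (q ^ d_k3 d)%N; set N' := (q ^ d_k3 d')%N.
have E : R ^+ N' = 'X^(N + n * N').
  apply: poly_eqf0 => a a0.
  have [E _] := dh_R1 D (inG_mk 0 0 0 a0).
  move: E; rewrite HR // /e3 -!exprnP /= expr_div_n => /(canRL (mulfVK _)).
  rewrite !expf_neq0 // => /(_ isT) HH.
  by rewrite horner_exp hornerXn HH -exprM -exprD.
have := congr1 (fun p : {poly K} => (size p).-1) E.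
rewrite size_exp size_polyXn /= => E2.
by rewrite -(dvdn_addl _ (dvdn_mull n (dvdnn N'))) -E2 dvdn_mull.
Qed.

Lemma dh_R45 K q d d' F Phi lam mu : @DirHyp K q d d' F Phi lam mu ->
  (forall a, a != 0 -> ca (F (mkG 0 0 0 a)) = a) ->
  exists df s : nat, [/\ (0 < df)%N, (0 < s)%N, d_e2 d' = d_e2 d * df%:Z,
     h3 q d' = (s * h3 q d)%N & (h2 q d' * df = h2 q d * s)%N].
Proof.
move=> D Hchi; have hq := char_exp_gt0 (dh_q D).
have [_ reg1 reg2 _ _] := dh_reg D.
have [fp Hf] := reg_2 reg2; have [gp Hg] := reg_1 reg1.
set f := fun u => c2 (F (mkG 0 u 0 1)).
have f0 : f 0 = 0.
  have ee : gmul q d (mkG 0 0 0 1) (mkG 0 0 0 1) = mkG 0 0 0 (1 : K).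
    by rewrite /gmul /= !exp1rz !mul1r ?mulr0 psi1_0 // psi20y // !addr0.
  have := congr1 F ee; rewrite (dh_hom D) ?inG1 // (dh_Fn D 0).
  rewrite /gmul /= !exp1rz mul1r psi20y // addr0 => /(congr1 (@c2 K)) /= E.
  by move: E; rewrite mul1r addr0 => E; apply: (addrI (f 0)); rewrite /f E addr0.
have f1 : f 1 != 0.
  apply/eqP => E; have : mkG 0 (1 : K) 0 1 = mkG 0 0 0 1.
    apply: (dh_inj D) => //; try exact: inG1.
    by rewrite (dh_Fn D 1) (dh_Fn D 0) -/(f 1) -/(f 0) E f0.
  by move/(congr1 (@c2 K)) => /= /eqP; rewrite oner_eq0.
have lam0 := dh_lam D.
have sf : (1 < size fp)%N.
  rewrite ltnNge; apply/negP => /size1_polyC Ef.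
  by move: f1; rewrite /f Hf Ef hornerC -(hornerC (fp`_0) 0) -Ef -Hf -/(f 0) f0 eqxx.
set df := (size fp).-1.
have df0 : (0 < df)%N by rewrite /df -subn1 subn_gt0.
have He2 : d_e2 d' = d_e2 d * df%:Z.
  apply/esym/(@powz_inj K) => a a0.
  set c := a ^ d_e2 d.
  have c0 : c != 0 by rewrite expfz_neq0.
  have E : fp \Po (c *: 'X) = a ^ d_e2 d' *: fp.
    apply: poly_eqf => u; rewrite horner_comp hornerZ hornerZ hornerX -!Hf.
    exact: (dh_conj D Hchi).
  have sX : size (c *: 'X : {poly K}) = 2 by rewrite size_scale // size_polyX.
  have := congr1 lead_coef E.
  rewrite lead_coef_comp ?sX // lead_coefZ lead_coefZ lead_coefX mulr1 mulrC.
  move/(mulIf _); rewrite lead_coef_eq0 -size_poly_gt0 (ltn_trans _ sf) // => /(_ isT).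
  by rewrite -exprz_exp.
have lf1 : f 1 ^+ h2 q d' * lam ^+ h3 q d' != 0 by rewrite mulf_neq0 ?expf_neq0.
have Eg3 : gp \Po 'X^(h3 q d) = (f 1 ^+ h2 q d' * lam ^+ h3 q d') *: 'X^(h3 q d').
  apply: poly_eqf => w; rewrite horner_comp hornerZ !hornerXn -Hg.
  have := dh_comm D 1 w; rewrite expr1n mul1r => ->.
  by rewrite exprMn mulrA.
have H3 : h3 q d' = ((size gp).-1 * h3 q d)%N.
  have := congr1 (fun p : {poly K} => (size p).-1) Eg3.
  by rewrite size_comp_poly size_polyXn size_scale // size_polyXn.
have s0 : (0 < (size gp).-1)%N.
  by move: (qpow_gt0 (d_l3 d') hq); rewrite -/(h3 q d') H3 muln_gt0 => /andP[].
have Eg2 : gp \Po 'X^(h2 q d) = lam ^+ h3 q d' *: fp ^+ h2 q d'.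
  apply: poly_eqf => u; rewrite horner_comp hornerZ hornerXn horner_exp -Hg -Hf.
  have := dh_comm D u 1; rewrite expr1n mulr1 mulr1 => ->.
  by rewrite mulrC.
have H2 : (h2 q d' * df = h2 q d * (size gp).-1)%N.
  have := congr1 (fun p : {poly K} => (size p).-1) Eg2.
  rewrite size_comp_poly size_polyXn size_scale ?expf_neq0 // size_exp => E.
  by rewrite /= in E; rewrite mulnC /df -E mulnC.
by exists df, (size gp).-1; split.
Qed.

Lemma size2_horner (K : fieldType) (p : {poly K}) y : size p = 2%N ->
  p.[y] = p`_1 * y + p`_0.
Proof.
move=> sp; rewrite horner_coef sp big_ord_recr big_ord_recr big_ord0 /=.
by rewrite add0r expr0 expr1 mulr1 addrC.
Qed.

Theorem mainTheorem17 (K : closedFieldType) (q : nat) (d d' : gdata) :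
  char_exp K q ->
  admissible q d -> admissible q d' ->
  isom_alg_perm K q d d' ->
  (d_e2 d', e3 q d', h2 q d', h3 q d') = (d_e2 d, e3 q d, h2 q d, h3 q d).
Proof.
move=> hc _ _ [F [Finv [Phi [[mF mFi FiF FFi Fhom] [bij mor blocks compat]]]]].
have hq := char_exp_gt0 hc.
have [FinG _ _ _ _] := mF; have [FiinG _ _ _ _] := mFi.
have Hblk : forall x y, (Phi (x, y)).2 = (Phi (0, y)).2.
  move=> x y; have [c' Hc] := blocks y.
  have h1 := (Hc (Phi (x, y))).1; have h2' := (Hc (Phi (0, y))).1.
  by rewrite h1 ?h2' //; [exists (0, y) | exists (x, y)].
have [_ [P2 HP2]] := mor.
have [p Hp] := ev2_y P2.
have Hphi : forall x y, (Phi (x, y)).2 = p.[y].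
  by move=> x y; rewrite Hblk HP2 Hp.
have [_ _ _ regi3 _] := mFi.
have [rp Hr] := reg_3 regi3.
have Hcomp : p \Po rp = 'X + (p.[0])%:P.
  apply: poly_eqf => w; rewrite horner_comp hornerD hornerX hornerC -Hr.
  have gi : inG (Finv (mkG 0 0 w 1)) by apply: FiinG; exact: inG1.
  have := congr1 snd (compat _ (0, 0) gi); rewrite FFi ?inG1 //.
  rewrite /gact /= mulr0 addr0 !Hphi exp1rz mul1r => <-.
  by rewrite mulr0 addr0.
have sp : size p = 2%N.
  have := congr1 (fun r : {poly K} => (size r).-1) Hcomp.
  rewrite size_comp_poly size_XaddC /= => /eqP; rewrite muln_eq1 => /andP[/eqP E _].
  by move: E; case: (size p) => [|[|[|]]].
set lam := p`_1; set mu := p`_0.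
have lam0 : lam != 0.
  have : lead_coef p != 0 by rewrite lead_coef_eq0 -size_poly_gt0 sp.
  by rewrite lead_coefE sp.
have HP2' : forall x y, (Phi (x, y)).2 = lam * y + mu.
  by move=> x y; rewrite Hphi size2_horner.
have [Phii PhiK PhiiK] := bij.
have Finj : forall g h, inG g -> inG h -> F g = F h -> g = h.
  by move=> g h gG hG E; rewrite -(FiF g gG) -(FiF h hG) E.
have DF : DirHyp q d d' F Phi lam mu.
  have sur : forall P', exists P, Phi P = P' by move=> P'; exists (Phii P'); rewrite PhiiK.
  by split.
have Fiinj : forall g h, inG g -> inG h -> Finv g = Finv h -> g = h.
  by move=> g h gG hG E; rewrite -(FFi g gG) -(FFi h hG) E.
have Fihom : forall g h, inG g -> inG h ->
    Finv (gmul q d' g h) = gmul q d (Finv g) (Finv h).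
  move=> g h gG hG.
  rewrite -{1}(FFi g gG) -{1}(FFi h hG) -Fhom ?FiinG // FiF //.
  by apply: inG_mul; apply: FiinG.
have DB : DirHyp q d' d Finv Phii (lam^-1) (- (lam^-1 * mu)).
  have sur : forall P', exists P, Phii P = P' by move=> P'; exists (Phi P'); rewrite PhiK.
  have li : lam^-1 != 0 by rewrite invr_eq0.
  have P2i : forall x y, (Phii (x, y)).2 = lam^-1 * y + - (lam^-1 * mu).
    move=> x y; have := HP2' (Phii (x, y)).1 (Phii (x, y)).2.
    rewrite -surjective_pairing PhiiK /=; set t := (Phii (x, y)).2 => E.
    by rewrite E mulrDr mulKf // addrK.
  have cmi : forall g P, inG g -> Phii (gact q d' g P) = gact q d (Finv g) (Phii P).
    move=> g P gG; apply: (can_inj PhiK); rewrite PhiiK compat ?FiinG //.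
    by rewrite FFi // PhiiK.
  by split.
have e3E : e3 q d' = e3 q d.
  have := dh_R3 DF; have := dh_R3 DB => H1 H2.
  have /eqP E : (q ^ d_k3 d' == q ^ d_k3 d)%N by rewrite eqn_dvd H2 H1.
  by rewrite /e3 E.
have chiF : forall a, a != 0 -> ca (F (mkG 0 0 0 a)) = a.
  move=> a a0; have [E _] := dh_R1 DF (inG_mk 0 0 0 a0).
  apply: (frob_inj (k := d_k3 d) hc).
  by move: E; rewrite e3E /e3 -!exprnP.
have chiB : forall a, a != 0 -> ca (Finv (mkG 0 0 0 a)) = a.
  move=> a a0; have [E _] := dh_R1 DB (inG_mk 0 0 0 a0).
  apply: (frob_inj (k := d_k3 d) hc).
  by move: E; rewrite e3E /e3 -!exprnP.
have [df [s [df0 s0 He2 Hh3 Hh2]]] := dh_R45 DF chiF.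
have [df' [s' [df0' s0' He2' Hh3' Hh2']]] := dh_R45 DB chiB.
have h3p : (0 < h3 q d)%N by exact: qpow_gt0.
have h2p : (0 < h2 q d)%N by exact: qpow_gt0.
have ss : (s' * s = 1)%N.
  apply/eqP; rewrite -(eqn_pmul2r h3p) mul1n -mulnA -Hh3 -Hh3'.
  done.
move/eqP: ss; rewrite muln_eq1 => /andP[/eqP s'1 /eqP s1].
rewrite s1 in Hh3 Hh2; rewrite mul1n in Hh3; rewrite muln1 in Hh2.
have dd : (df' * df = 1)%N.
  apply/eqP; rewrite -(eqn_pmul2l h2p) mulnA Hh2' s'1 muln1 Hh2 muln1.
  done.
move/eqP: dd; rewrite muln_eq1 => /andP[_ /eqP df1].
rewrite df1 muln1 in Hh2; rewrite df1 mulr1 in He2.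
by rewrite He2 e3E Hh2 Hh3.
Qed.
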